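(* Let $(F,\phi)$ be an extended representation graph for $E$, let $w$ be a source in $F$, and let $p,q$ be paths in $F$ (of length $\ge0$) with source $w$. Then $r(p)=r(q)$ if and only if $p=q$.
   Context: $E$ is a row-finite directed graph with, for each vertex $v$ emitting an edge, a chosen special edge $e^v\in s^{-1}(v)$; other edges are nonspecial. The double graph $E_d$ has vertices $E^0$ and edges $e$ (real) and $e^*$ (ghost) for $e\in E^1$, with $s_d(e)=s(e),r_d(e)=r(e),s_d(e^* )=r(e),r_d(e^* )=s(e)$. Paths of length $0$ are vertices $w$ with $s(w)=r(w)=w$. An extended representation graph for $E$ is a pair $(F,\phi)$, $F$ a directed graph, $\phi:F\to E_d$ a graph homomorphism, such that for every $w\in F^0$: (i) $w$ is a source (receives no edge) or receives exactly one edge $f_w$; (ii) if $w$ is a source or $\phi(f_w)$ is a nonspecial real edge, $\phi$ maps $s^{-1}(w)$ bijectively onto $s_d^{-1}(\phi(w))$; (iii) if $\phi(f_w)$ is a special real edge, onto $s_d^{-1}(\phi(w))\setminus\{\phi(f_w)^*\}$; (iv) if $\phi(f_w)$ is a ghost edge, onto the ghost edges in $s_d^{-1}(\phi(w))$. *)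

(* Defs.v *)
From Stdlib Require Import List.
Import ListNotations.
Set Implicit Arguments.

Record graph := Graph {
  vert : Type;
  edge : Type;
  src : edge -> vert;
  rng : edge -> vert
}.
Arguments src {g} e.
Arguments rng {g} e.

Definition row_finite (E : graph) : Prop :=
  forall v : vert E, exists l : list (edge E), forall e, src e = v <-> In e l.

(* Choice of special edges: [sp v = Some e] means e = e^v; every vertex
   emitting an edge has a chosen special edge in s^{-1}(v). *)
Definition special_choice (E : graph) (sp : vert E -> option (edge E)) : Prop :=
  (forall v e, sp v = Some e -> src e = v) /\
  (forall v, (exists e, src e = v) -> exists e, sp v = Some e).
Arguments special_choice {E} sp.

Definition special (E : graph) (sp : vert E -> option (edge E)) (e : edge E) : Prop :=
  sp (src e) = Some e.
Arguments special {E} sp e.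

(* The double graph E_d: edges inl e (real e) and inr e (the ghost edge e^* ). *)
Definition dsrc (E : graph) (x : edge E + edge E) : vert E :=
  match x with inl e => src e | inr e => rng e end.
Definition drng (E : graph) (x : edge E + edge E) : vert E :=
  match x with inl e => rng e | inr e => src e end.
Arguments dsrc {E} x.
Arguments drng {E} x.
Definition double (E : graph) : graph :=
  Graph (@dsrc E) (@drng E).

Definition is_ghost (A B : Type) (x : A + B) : Prop :=
  match x with inl _ => False | inr _ => True end.

Definition graph_hom (F : graph) (E : graph)
  (phi0 : vert F -> vert E) (phi1 : edge F -> edge E + edge E) : Prop :=
  forall f, dsrc (phi1 f) = phi0 (src f) /\ drng (phi1 f) = phi0 (rng f).
Arguments graph_hom {F E} phi0 phi1.

Definition bij_onto (F : graph) (X : Type) (phi1 : edge F -> X)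
  (w : vert F) (P : X -> Prop) : Prop :=
  (forall f, src f = w -> P (phi1 f)) /\
  (forall x, P x -> exists f, src f = w /\ phi1 f = x) /\
  (forall f g, src f = w -> src g = w -> phi1 f = phi1 g -> f = g).
Arguments bij_onto {F X} phi1 w P.

Definition ext_rep_graph (E : graph) (sp : vert E -> option (edge E))
  (F : graph) (phi0 : vert F -> vert E) (phi1 : edge F -> edge E + edge E) : Prop :=
  graph_hom phi0 phi1 /\
  forall w : vert F,
    (forall f g, rng f = w -> rng g = w -> f = g) /\
    ((forall f, rng f <> w) ->
       bij_onto phi1 w (fun x => dsrc x = phi0 w)) /\
    (forall fw, rng fw = w ->
       match phi1 fw with
       | inl e =>
           (~ special sp e -> bij_onto phi1 w (fun x => dsrc x = phi0 w)) /\
           (special sp e ->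
              bij_onto phi1 w (fun x => dsrc x = phi0 w /\ x <> inr e))
       | inr e =>
           bij_onto phi1 w (fun x => dsrc x = phi0 w /\ is_ghost x)
       end).
Arguments ext_rep_graph {E} sp {F} phi0 phi1.

(* Finite paths in a graph: a pair (start vertex, list of edges e1 ... en)
   with s(e1) = start and r(e_i) = s(e_{i+1}); n = 0 gives the vertex path. *)
Definition path (F : graph) : Type := (vert F * list (edge F))%type.

Fixpoint chain (F : graph) (v : vert F) (l : list (edge F)) : Prop :=
  match l with
  | [] => True
  | e :: l' => src e = v /\ chain F (rng e) l'
  end.
Arguments chain {F} v l.

Definition is_path (F : graph) (p : path F) : Prop := chain (fst p) (snd p).
Arguments is_path {F} p.

Definition path_src (F : graph) (p : path F) : vert F := fst p.
Arguments path_src {F} p.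

Fixpoint last_vertex (F : graph) (v : vert F) (l : list (edge F)) : vert F :=
  match l with
  | [] => v
  | e :: l' => last_vertex F (rng e) l'
  end.
Arguments last_vertex {F} v l.

Definition path_rng (F : graph) (p : path F) : vert F := last_vertex (fst p) (snd p).
Arguments path_rng {F} p.

Definition is_source (F : graph) (w : vert F) : Prop := forall f : edge F, rng f <> w.
Arguments is_source {F} w.

(* Main.v *)
Require Import Defs.
From Stdlib Require Import List.
Import ListNotations.

Lemma lv_app (F : graph) (v : vert F) l e : last_vertex v (l ++ [e]) = rng e.
Proof. revert v; induction l; simpl; auto. Qed.

Lemma chain_app (F : graph) (v : vert F) l e :
  chain v (l ++ [e]) -> chain v l.
Proof. revert v; induction l; simpl; intros v H; auto. destruct H; split; auto. Qed.

Lemma main_aux (F : graph) (w : vert F) (Hw : is_source w)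
  (Huniq : forall f g : edge F, rng f = rng g -> f = g) :
  forall l1 l2, last_vertex w l1 = last_vertex w l2 -> chain w l1 -> chain w l2 -> l1 = l2.
Proof.
  induction l1 as [|e1 l1 IH] using rev_ind; intros l2 H C1 C2.
  - destruct l2 as [|e2 l2 _] using rev_ind; auto.
    rewrite lv_app in H. simpl in H. exfalso; exact (Hw e2 (eq_sym H)).
  - destruct l2 as [|e2 l2 _] using rev_ind.
    + rewrite lv_app in H. simpl in H. exfalso; exact (Hw e1 H).
    + rewrite !lv_app in H. pose proof (Huniq _ _ H) as ->.
      f_equal. apply IH; [| eapply chain_app; eauto | eapply chain_app; eauto].
      clear IH. revert C1 C2.
      assert (forall v l, chain v (l ++ [e2]) -> src e2 = last_vertex v l) as K.
      { intros v l; revert v; induction l; simpl; intros v Hc; [tauto|]. destruct Hc; auto. }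
      intros C1 C2. rewrite <- (K _ _ C1), <- (K _ _ C2). reflexivity.
Qed.

Theorem lemma5p5 (E : graph) (sp : vert E -> option (edge E))
  (HE : row_finite E) (Hsp : special_choice sp)
  (F : graph) (phi0 : vert F -> vert E) (phi1 : edge F -> edge E + edge E)
  (HF : ext_rep_graph sp phi0 phi1)
  (w : vert F) (Hw : is_source w)
  (p q : path F) (Hp : is_path p) (Hq : is_path q)
  (Hps : path_src p = w) (Hqs : path_src q = w) :
  path_rng p = path_rng q <-> p = q.
Proof.
  split; [|intros ->; reflexivity].
  destruct HF as [_ HF].
  destruct p as [v1 l1], q as [v2 l2]; unfold path_src, path_rng, is_path in *; simpl in *.
  subst v1 v2. intros H. f_equal. apply (@main_aux F w Hw); auto.
  intros f g Hfg. destruct (HF (rng g)) as [U _]. apply U; auto.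
Qed.
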